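(* Let $\vec H$ be a directed graph on $k$ vertices with $\chi(\vec H)\le p$, and let $0<\delta<\frac1{8k}$. There exists $n_0$, depending only on $\vec H$ (and $\delta$), such that for every $n>n_0$ the following holds. Let $G$ be a $p$-partite graph on $n$ vertices with parts $V_1,\dots,V_p$, each of size at least $10^k\delta n$, let $\vec G$ be a relevant orientation of $G$ (with respect to this partition and $\delta$), and let $c:V(\vec H)\to[p]$ be a proper colouring of $\vec H$. Then there is an embedding of $\vec H$ into $\vec G$ (as a directed subgraph) such that each vertex $v$ of $\vec H$ is mapped into $V_{c(v)}$.
   Context: $\chi(\vec H)$ is the chromatic number of the underlying graph of $\vec H$; a proper colouring of $\vec H$ is one of its underlying graph. Given a partition $V(G)=V_1\cup\dots\cup V_p$ and $\delta>0$, an orientation $\vec G$ of $G$ is relevant if for every $i\neq j$ and all $X_1\subseteq V_i$, $X_2\subseteq V_j$ with $|X_1|,|X_2|>2\delta n$, there are at least $|X_1||X_2|/10$ edges of $\vec G$ directed from $X_1$ to $X_2$. *)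

(* Defs.v *)
From HB Require Import structures.
From mathcomp Require Import all_boot all_order all_algebra.
From mathcomp Require Import reals.
Set Implicit Arguments. Unset Strict Implicit. Unset Printing Implicit Defensive.
Import Order.TTheory GRing.Theory Num.Theory.
Local Open Scope ring_scope.

(* A directed graph on vertex set 'I_k is an arc relation a : rel 'I_k.
   It is an oriented graph (no loops, no pair of opposite arcs). *)
Definition oriented {T : finType} (a : rel T) : Prop :=
  forall x y, a x y -> ~~ a y x.

Definition proper_colouring {T : finType} (a : rel T) (p : nat) (c : T -> 'I_p) : Prop :=
  forall u v, a u v || a v u -> c u != c v.

Definition chi_le {T : finType} (a : rel T) (p : nat) : Prop :=
  exists c : T -> 'I_p, proper_colouring a c.

(* g is an orientation of a p-partite graph whose parts are V_i = part^{-1}(i):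
   no loops/opposite arcs and every arc joins two different parts. *)
Definition partite_orientation {n p : nat} (part : 'I_n -> 'I_p) (g : rel 'I_n) : Prop :=
  oriented g /\ forall x y, g x y -> part x != part y.

Definition n_arcs {n : nat} (g : rel 'I_n) (X1 X2 : {set 'I_n}) : nat :=
  #|[set xy : 'I_n * 'I_n | [&& xy.1 \in X1, xy.2 \in X2 & g xy.1 xy.2]]|.

Definition relevant {R : realType} {n p : nat} (part : 'I_n -> 'I_p) (delta : R)
    (g : rel 'I_n) : Prop :=
  forall (i j : 'I_p) (X1 X2 : {set 'I_n}), i != j ->
    (forall x, x \in X1 -> part x = i) ->
    (forall x, x \in X2 -> part x = j) ->
    2 * delta * n%:R < #|X1|%:R ->
    2 * delta * n%:R < #|X2|%:R ->
    ((#|X1| * #|X2|)%:R / 10 <= (n_arcs g X1 X2)%:R :> R).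

Definition embedding {k n : nat} (a : rel 'I_k) (g : rel 'I_n) (f : 'I_k -> 'I_n) : Prop :=
  injective f /\ forall u v, a u v -> g (f u) (f v).

(* Main.v *)
Require Import Defs.
From HB Require Import structures.
From mathcomp Require Import all_boot all_order all_algebra.
From mathcomp Require Import reals.
From mathcomp Require Import zify ring lra.
Set Implicit Arguments. Unset Strict Implicit. Unset Printing Implicit Defensive.
Import Order.TTheory GRing.Theory Num.Theory.

Lemma narcs_sum n (g : rel 'I_n) X1 X2 :
  n_arcs g X1 X2 = (\sum_(x in X1) \sum_(y in X2) (g x y : nat))%N.
Proof.
rewrite /n_arcs -sum1_card pair_big /= [LHS]big_mkcond [RHS]big_mkcond.
apply: eq_bigr => -[x y] _ /=; rewrite inE /=.
by case: (x \in X1); case: (y \in X2); case: (g x y).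
Qed.

Lemma sum_bool_card n (Y : {set 'I_n}) (b : pred 'I_n) :
  (\sum_(y in Y) (b y : nat))%N = #|[set y in Y | b y]|.
Proof.
rewrite -sum1_card [RHS](eq_bigl (fun y => (y \in Y) && b y)); last by move=> y /=; rewrite inE.
rewrite big_mkcondr /=; apply: eq_bigr => y _; by case: (b y).
Qed.

Lemma card_bigcup_le (I : finType) n (P : pred I) (F : I -> {set 'I_n}) :
  (#|\bigcup_(i | P i) F i| <= \sum_(i | P i) #|F i|)%N.
Proof.
apply: (big_ind2 (fun (A : {set 'I_n}) m => #|A| <= m)%N).
- by rewrite cards0.
- move=> A a B b hA hB; rewrite cardsU; lia.
- by [].
Qed.

Lemma pow10_ge a : (10 + 2 * a <= 10 ^ a.+1)%N.
Proof.
elim: a => [//|a IH]; rewrite expnS; set t := 10 ^ a.+1 in IH *; lia.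
Qed.

Local Open Scope ring_scope.

Lemma bad_bound (R : realType) n (d : R) (r : rel 'I_n) (X Y : {set 'I_n}) :
  0 <= d ->
  (forall B : {set 'I_n}, B \subset X -> 2 * d < #|B|%:R ->
     (#|B| * #|Y|)%N%:R / 10 <= (\sum_(x in B) #|[set y in Y | r x y]|)%N%:R :> R) ->
  #|[set x in X | (10 * #|[set y in Y | r x y]| < #|Y|)%N]|%:R <= 2 * d.
Proof.
move=> d0 H; set B := [set x in X | _].
rewrite leNgt; apply/negP => hB.
have sBX : B \subset X by apply/subsetP => x; rewrite inE => /andP[].
have := H B sBX hB.
set S := (\sum_(x in B) _)%N.
have B0 : (0 < #|B|)%N.
  have : (0 : R) < #|B|%:R by apply: le_lt_trans hB; lra.
  by rewrite ltr0n.
have hS : (10 * S + #|B| <= #|B| * #|Y|)%N.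
  rewrite /S big_distrr /= -[X in (_ + X <= _)%N]sum1_card -big_split /= -sum_nat_const.
  apply: leq_sum => x; rewrite inE => /andP[_] h. by rewrite addn1.
have hS' : (10 * S < #|B| * #|Y|)%N by lia.
move: hS'; rewrite -(ltr_nat R) natrM => hS' h.
lra.
Qed.

Lemma bad_out (R : realType) n p (part : 'I_n -> 'I_p) (delta : R) (G : rel 'I_n)
    (i j : 'I_p) (X Y : {set 'I_n}) :
  relevant part delta G -> i != j ->
  (forall x, x \in X -> part x = i) -> (forall y, y \in Y -> part y = j) ->
  0 <= delta * n%:R -> 2 * (delta * n%:R) < #|Y|%:R ->
  #|[set x in X | (10 * #|[set y in Y | G x y]| < #|Y|)%N]|%:R <= 2 * (delta * n%:R).
Proof.
move=> rel ij hX hY d0 hYb; apply: bad_bound => // B sBX hB.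
have := rel i j B Y ij (fun x xB => hX x (subsetP sBX x xB)) hY.
rewrite -!mulrA => /(_ hB hYb).
rewrite narcs_sum (eq_bigr (fun x => #|[set y in Y | G x y]|)) //.
by move=> x _; rewrite sum_bool_card.
Qed.

Lemma bad_in (R : realType) n p (part : 'I_n -> 'I_p) (delta : R) (G : rel 'I_n)
    (i j : 'I_p) (X Y : {set 'I_n}) :
  relevant part delta G -> i != j ->
  (forall x, x \in X -> part x = i) -> (forall y, y \in Y -> part y = j) ->
  0 <= delta * n%:R -> 2 * (delta * n%:R) < #|Y|%:R ->
  #|[set x in X | (10 * #|[set y in Y | G y x]| < #|Y|)%N]|%:R <= 2 * (delta * n%:R).
Proof.
move=> rel ij hX hY d0 hYb; apply: (@bad_bound R n _ (fun x y => G y x)) => // B sBX hB.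
have ji : j != i by rewrite eq_sym.
have := rel j i Y B ji hY (fun x xB => hX x (subsetP sBX x xB)).
rewrite -!mulrA => /(_ hYb hB).
rewrite narcs_sum exchange_big /= mulnC.
rewrite (eq_bigr (fun x => #|[set y in Y | G y x]|)) //.
by move=> x _; rewrite sum_bool_card.
Qed.

Lemma card_gt k m : (#|[set u : 'I_k | (m < u)%N]| <= k - m.+1)%N.
Proof.
rewrite cardE -(size_map val) -(size_iota m.+1 (k - m.+1)).
apply: uniq_leq_size; first by rewrite map_inj_uniq ?enum_uniq //; apply: val_inj.
move=> x /mapP[u]; rewrite mem_enum inE => mu ->.
rewrite mem_iota mu /=; have := ltn_ord u; lia.
Qed.

Record Inv (R : realType) k n p (H : rel 'I_k) (G : rel 'I_n) (part : 'I_n -> 'I_p)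
  (c : 'I_k -> 'I_p) (d : R) (m : nat) (f : 'I_k -> 'I_n) (C : 'I_k -> {set 'I_n}) : Prop :=
 MkInv {
   inv1 : forall u w : 'I_k, (u < m)%N -> (w < m)%N -> f u = f w -> u = w;
   inv2 : forall u : 'I_k, (u < m)%N -> part (f u) = c u;
   inv3 : forall u w : 'I_k, (u < m)%N -> (w < m)%N -> H u w -> G (f u) (f w);
   inv4 : forall u : 'I_k, (m <= u)%N -> forall y, y \in C u -> part y = c u;
   inv5 : forall u w : 'I_k, (m <= u)%N -> (w < m)%N -> forall y, y \in C u ->
         (H w u -> G (f w) y) /\ (H u w -> G y (f w));
   inv6 : forall u : 'I_k, (m <= u)%N -> 10 ^+ (k - m) * d <= #|C u|%:R }.

Lemma step (R : realType) k n p (H : rel 'I_k) (G : rel 'I_n) (part : 'I_n -> 'I_p)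
  (c : 'I_k -> 'I_p) (delta : R) (m : nat) (f : 'I_k -> 'I_n) (C : 'I_k -> {set 'I_n}) :
  oriented H -> proper_colouring H c -> relevant part delta G ->
  0 < delta * n%:R -> k%:R < 10 * (delta * n%:R) -> (m < k)%N ->
  Inv H G part c (delta * n%:R) m f C ->
  exists f' C', Inv H G part c (delta * n%:R) m.+1 f' C'.
Proof.
move=> oH pc rel d0 dk mk [I1 I2 I3 I4 I5 I6].
set d := delta * n%:R in d0 dk I6 *.
set v : 'I_k := Ordinal mk.
have eqv : forall w : 'I_k, (w == v) = (val w == m) by [].
have pw : forall a, 10 + 2 * a%:R <= (10 : R) ^+ a.+1.
  by move=> a; have := pow10_ge a; rewrite -(ler_nat R) natrX natrD natrM.
have big : forall u : 'I_k, (m <= u)%N -> 2 * d < #|C u|%:R.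
  move=> u mu; apply: lt_le_trans (I6 u mu).
  have -> : (k - m = (k - m.+1).+1)%N by lia.
  have h1 : (10 : R) <= 10 ^+ (k - m.+1).+1.
    have := pw (k - m.+1)%N; have : (0 : R) <= (k - m.+1)%N%:R by [].
    lra.
  have := ler_wpM2r (ltW d0) h1; lra.
pose B u := if H v u then [set x in C v | (10 * #|[set y in C u | G x y]| < #|C u|)%N]
            else if H u v then [set x in C v | (10 * #|[set y in C u | G y x]| < #|C u|)%N]
            else set0.
have Bb : forall u : 'I_k, (m < u)%N -> #|B u|%:R <= 2 * d.
  move=> u mu; rewrite /B.
  have mu' : (m <= u)%N by lia.
  have mv : (m <= v)%N by [].
  case: ifP => hvu.
    apply: bad_out rel _ (I4 v mv) (I4 u mu') (ltW d0) (big u mu').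
    by apply: pc; rewrite hvu.
  case: ifP => huv.
    apply: bad_in rel _ (I4 v mv) (I4 u mu') (ltW d0) (big u mu').
    by apply: pc; rewrite huv orbT.
  by rewrite cards0; lra.
pose L := [set u : 'I_k | (m < u)%N].
pose U := (f @: [set: 'I_k]) :|: \bigcup_(u in L) B u.
have cU : #|U|%:R < #|C v|%:R :> R.
  have h1 : (#|U| <= k + \sum_(u in L) #|B u|)%N.
    apply: leq_trans (leq_card_setU _ _).1 _; apply: leq_add.
      by apply: leq_trans (leq_imset_card _ _) _; rewrite cardsT card_ord.
    exact: card_bigcup_le.
  have h2 : (\sum_(u in L) #|B u|)%N%:R <= (2 * d) *+ #|L| :> R.
    rewrite natr_sum -sumr_const; apply: ler_sum => u; rewrite inE; exact: Bb.
  have h3 : #|L|%:R <= (k - m.+1)%N%:R :> R by rewrite ler_nat card_gt.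
  have h4 := I6 v (leqnn m).
  rewrite (_ : (k - m = (k - m.+1).+1)%N) in h4; last by lia.
  have h5 := pw (k - m.+1)%N.
  move: h1; rewrite -(ler_nat R) natrD => h1.
  rewrite -mulr_natr in h2.
  have h6 := ler_wpM2l (ltW (mulr_gt0 (ltr0Sn R 1) d0)) h3.
  have h7 := ler_wpM2r (ltW d0) h5.
  lra.
have : ~~ (C v \subset U).
  apply/negP => sub; have := subset_leq_card sub; rewrite -(ler_nat R); lra.
case/subsetPn => x xC xU.
have xf : forall w, x != f w.
  move=> w; apply: contraNneq xU => ->; rewrite inE; apply/orP; left.
  by apply: imset_f; rewrite inE.
have xB : forall u : 'I_k, (m < u)%N -> x \notin B u.
  move=> u mu; apply: contraNN xU => xb; rewrite inE; apply/orP; right.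
  by apply/bigcupP; exists u; rewrite // inE.
pose f' := fun w => if w == v then x else f w.
pose C' := fun u => if H v u then [set y in C u | G x y]
                    else if H u v then [set y in C u | G y x] else C u.
have C'sub : forall u : 'I_k, C' u \subset C u.
  move=> u; rewrite /C'; case: ifP => _; first by apply/subsetP => y; rewrite inE => /andP[].
  by case: ifP => _ //; apply/subsetP => y; rewrite inE => /andP[].
have ltS : forall w : 'I_k, (w < m.+1)%N -> w = v \/ (w < m)%N.
  move=> w; rewrite ltnS leq_eqVlt => /orP[/eqP e|]; last by right.
  by left; apply: val_inj.
have nv : forall w : 'I_k, (w < m)%N -> (w == v) = false.
  by move=> w wm; apply/negbTE; apply: contraTneq wm => ->; rewrite /= ltnn.
exists f', C'; split.
- move=> u w /ltS[->|um] /ltS[->|wm]; rewrite /f' ?eqxx //.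
  + rewrite (nv w wm).
    by move=> e; have := xf w; rewrite e eqxx.
  + rewrite (nv u um).
    by move=> e; have := xf u; rewrite e eqxx.
  + rewrite (nv w wm).
    rewrite (nv u um).
    exact: I1.
- move=> u /ltS[->|um]; rewrite /f'; first by rewrite eqxx; exact: I4 xC.
  rewrite (nv u um).
  exact: I2.
- move=> u w /ltS[->|um] /ltS[->|wm]; rewrite /f' ?eqxx.
  + by move=> hvv; have := oH _ _ hvv; rewrite hvv.
  + rewrite (nv w wm).
    by move=> hvw; case: (I5 v w (leqnn m) wm x xC) => _; apply.
  + rewrite (nv u um).
    by move=> huv; case: (I5 v u (leqnn m) um x xC) => + _; apply.
  + rewrite (nv w wm).
    rewrite (nv u um).
    exact: I3.
- move=> u mu y yC; apply: (I4 u (ltnW mu)); exact: (subsetP (C'sub u)).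
- move=> u w mu /ltS[->|wm] y yC.
  + rewrite /f' eqxx; move: yC; rewrite /C'.
    case: ifP => hvu.
      rewrite inE => /andP[_ gxy]; split => // huv.
      by have := oH _ _ hvu; rewrite huv.
    case: ifP => huv.
      by rewrite inE => /andP[_ gyx]; split => // hvu'; rewrite hvu' in hvu.
    by move=> _; split => h; [rewrite h in hvu | rewrite h in huv].
  + have -> : (f' w = f w) by rewrite /f' (nv w wm).
    exact: I5 (ltnW mu) wm y (subsetP (C'sub u) y yC).
- move=> u mu.
  have h6 := I6 u (ltnW mu).
  rewrite (_ : (k - m = (k - m.+1).+1)%N) ?exprS in h6; last by lia.
  have xBu := xB u mu.
  rewrite /C'; move: xBu; rewrite /B.
  case: ifP => hvu.
    rewrite inE xC /= -leqNgt => le.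
    move: le; rewrite -(ler_nat R) natrM => le; lra.
  case: ifP => huv.
    rewrite inE xC /= -leqNgt => le.
    move: le; rewrite -(ler_nat R) natrM => le; lra.
  move=> _.
  apply: le_trans h6.
  have p0 : 0 <= (10 : R) ^+ (k - m.+1) by apply: exprn_ge0.
  have := mulr_ge0 p0 (ltW d0); nra.
Qed.

Theorem mainTheorem10 (R : realType) (k p : nat) (H : rel 'I_k) (delta : R) :
  oriented H -> chi_le H p ->
  0 < delta -> delta < (8 * k%:R)^-1 ->
  exists n0 : nat, forall n : nat, (n0 < n)%N ->
  forall (part : 'I_n -> 'I_p) (G : rel 'I_n),
    (forall i : 'I_p, 10 ^+ k * delta * n%:R <= #|[set x | part x == i]|%:R) ->
    partite_orientation part G ->
    relevant part delta G ->
  forall c : 'I_k -> 'I_p, proper_colouring H c ->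
  exists f : 'I_k -> 'I_n, embedding H G f /\ forall v, part (f v) = c v.
Proof.
move=> oH _ dpos _.
have x0 : 0 <= k%:R / (10 * delta) by apply: divr_ge0 => //; lra.
exists (Num.bound (k%:R / (10 * delta))) => n n0n part G hsz _ rel c pc.
have hb := archi_boundP x0.
have hn : (Num.bound (k%:R / (10 * delta)))%:R < n%:R :> R by rewrite ltr_nat.
have npos : (0 < n)%N by lia.
have d0 : 0 < delta * n%:R by apply: mulr_gt0 => //; rewrite ltr0n.
have dk : k%:R < 10 * (delta * n%:R).
  have := lt_trans hb hn; rewrite ltr_pdivrMr; last by lra.
  move=> h; rewrite mulrA [10 * delta]mulrC -mulrA. lra.
have init : Inv H G part c (delta * n%:R) 0 (fun _ => Ordinal npos) (fun u => [set x | part x == c u]).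
  split => //.
  - by move=> u _ y; rewrite inE => /eqP.
  - by move=> u _; rewrite subn0 mulrA.
have all : forall m, (m <= k)%N -> exists f C, Inv H G part c (delta * n%:R) m f C.
  elim=> [|m IH] mk; first by exists (fun _ => Ordinal npos), (fun u => [set x | part x == c u]).
  have [f [C hI]] := IH (ltnW mk).
  exact: step oH pc rel d0 dk mk hI.
have [f [C [I1 I2 I3 _ _ _]]] := all k (leqnn k).
exists f; split; last by move=> v; apply: I2.
split; first by move=> u w; apply: I1.
by move=> u w; apply: I3.
Qed.
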